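(* Let $\Lambda=\{(W_j,\Lambda_j,v_j)\}_{j\in J}$ and $\Gamma=\{(V_j,\Gamma_j,v_j)\}_{j\in J}$ be g-fusion frames for $H$ with bounds $(A_1,B_1)$ and $(A_2,B_2)$ respectively, with g-fusion frame operators $S_\Lambda,S_\Gamma$, and let $\Lambda^\circ=\{(W_j^\circ,\Lambda_j^\circ,v_j)\}$ and $\Gamma^\circ=\{(V_j^\circ,\Gamma_j^\circ,v_j)\}$ be their canonical duals, i.e. $W_j^\circ=S_\Lambda^{-1}W_j$, $\Lambda_j^\circ=\Lambda_jP_{W_j}S_\Lambda^{-1}$, $V_j^\circ=S_\Gamma^{-1}V_j$, $\Gamma_j^\circ=\Gamma_jP_{V_j}S_\Gamma^{-1}$. If for some $D>0$ $$\Big|\sum_{j\in J}v_j^2\|\Lambda_jP_{W_j}f\|^2-\sum_{j\in J}v_j^2\|\Gamma_jP_{V_j}f\|^2\Big|\le D\|f\|^2\quad\forall f\in H,$$ then for all $f\in H$ $$\Big|\sum_{j\in J}v_j^2\|\Lambda_j^\circ P_{W_j^\circ}f\|^2-\sum_{j\in J}v_j^2\|\Gamma_j^\circ P_{V_j^\circ}f\|^2\Big|\le \frac{D}{A_1A_2}\|f\|^2.$$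
   Context: $H$ is a separable Hilbert space, $J$ a countable index set, $\{H_j\}_{j\in J}$ Hilbert spaces, and $P_W$ the orthogonal projection onto a closed subspace $W$. For closed subspaces $W_j\subseteq H$, weights $v_j>0$ and $\Lambda_j\in\mathcal{B}(H,H_j)$, $\{(W_j,\Lambda_j,v_j)\}_{j\in J}$ is a g-fusion frame with bounds $A,B$ if $0<A\le B<\infty$ and $A\|f\|^2\le\sum_j v_j^2\|\Lambda_jP_{W_j}f\|^2\le B\|f\|^2$ for all $f\in H$. Its g-fusion frame operator is $Sf=\sum_{j}v_j^2P_{W_j}\Lambda_j^*\Lambda_jP_{W_j}f$, which is bounded, self-adjoint, positive and invertible with $AI_H\le S\le BI_H$. *)

(* Defs.v *)
From HB Require Import structures.
From mathcomp Require Import all_boot all_order all_algebra.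
From mathcomp Require Import all_classical all_reals.
From mathcomp Require Import ereal esum.
From mathcomp Require complex.
Import complex.

Set Implicit Arguments.
Unset Strict Implicit.
Unset Printing Implicit Defensive.
Import Order.TTheory GRing.Theory Num.Theory.
Local Open Scope classical_set_scope.
Local Open Scope ring_scope.

Section Hilbert.
Variable R : realType.

Section Space.
Variable V : lmodType R[i].
Variable ip : V -> V -> R[i].

Definition nrm2 (f : V) : R := complex.Re (ip f f).
Definition nrm (f : V) : R := Num.sqrt (nrm2 f).

Definition is_inner_product : Prop :=
  (forall (a : R[i]) (x y z : V), ip (a *: x + y) z = a * ip x z + ip y z) /\
  (forall x y : V, ip y x = conjc (ip x y)) /\
  (forall x : V, 0 <= ip x x) /\
  (forall x : V, ip x x = 0 -> x = 0).

Definition cvg_to (u : nat -> V) (l : V) : Prop :=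
  forall e : R, 0 < e -> exists N : nat, forall n, (N <= n)%N -> nrm (u n - l) < e.

Definition complete_ip : Prop :=
  forall u : nat -> V,
    (forall e : R, 0 < e -> exists N : nat, forall m n,
        (N <= m)%N -> (N <= n)%N -> nrm (u m - u n) < e) ->
    exists l : V, cvg_to u l.

Definition is_hilbert : Prop := is_inner_product /\ complete_ip.

Definition separable : Prop :=
  exists u : nat -> V, forall (f : V) (e : R), 0 < e -> exists n, nrm (f - u n) < e.

Definition closed_subspace (W : set V) : Prop :=
  W 0 /\ (forall (a : R[i]) x y, W x -> W y -> W (a *: x + y)) /\
  (forall (u : nat -> V) (l : V), (forall n, W (u n)) -> cvg_to u l -> W l).

Definition oproj (W : set V) (f : V) : V :=
  xget 0 [set x | W x /\ forall w, W w -> ip (f - x) w = 0].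

(* unconditional convergence of a countable family of vectors:
   the net of finite partial sums converges to s *)
Definition hsum_to (J : choiceType) (F : J -> V) (s : V) : Prop :=
  forall e : R, 0 < e -> exists A0 : set J, finite_set A0 /\
    forall A : set J, finite_set A -> A0 `<=` A ->
      nrm (\sum_(j \in A) F j - s) < e.
End Space.

Definition bounded_op (U V : lmodType R[i]) (ipU : U -> U -> R[i])
    (ipV : V -> V -> R[i]) (T : U -> V) : Prop :=
  (forall (a : R[i]) x y, T (a *: x + y) = a *: T x + T y) /\
  exists M : R, forall f, nrm ipV (T f) <= M * nrm ipU f.

Definition adjoint (U V : lmodType R[i]) (ipU : U -> U -> R[i])
    (ipV : V -> V -> R[i]) (T : U -> V) (y : V) : U :=
  xget 0 [set x | forall f, ipV (T f) y = ipU f x].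

Definition finv (U : lmodType R[i]) (T : U -> U) (y : U) : U :=
  xget 0 [set x | T x = y].

Section GFusion.
Variables (J : countType) (H : lmodType R[i]) (ipH : H -> H -> R[i]).
Variables (K : J -> lmodType R[i]) (ipK : forall j, K j -> K j -> R[i]).

Definition gf_sum (W : J -> set H) (Lam : forall j, H -> K j) (v : J -> R)
    (f : H) : \bar R :=
  (\esum_(j in [set: J]) ((v j ^+ 2) * nrm2 (@ipK j) (Lam j (oproj ipH (W j) f)))%:E)%E.

Definition gfusion_frame (W : J -> set H) (Lam : forall j, H -> K j)
    (v : J -> R) (A B : R) : Prop :=
  0 < A /\ A <= B /\
  (forall j, closed_subspace ipH (W j)) /\
  (forall j, 0 < v j) /\
  (forall j, bounded_op ipH (@ipK j) (Lam j)) /\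
  (forall f : H, ((A * nrm2 ipH f)%:E <= gf_sum W Lam v f)%E /\
                 (gf_sum W Lam v f <= (B * nrm2 ipH f)%:E)%E).

Definition gf_op (W : J -> set H) (Lam : forall j, H -> K j) (v : J -> R)
    (f : H) : H :=
  xget 0 [set s | hsum_to ipH
    (fun j => real_complex R (v j ^+ 2) *:
       oproj ipH (W j) (adjoint ipH (@ipK j) (Lam j) (Lam j (oproj ipH (W j) f)))) s].

Definition dual_space (W : J -> set H) (Lam : forall j, H -> K j) (v : J -> R)
    (j : J) : set H :=
  finv (gf_op W Lam v) @` W j.

Definition dual_op (W : J -> set H) (Lam : forall j, H -> K j) (v : J -> R)
    (j : J) : H -> K j :=
  fun f => Lam j (oproj ipH (W j) (finv (gf_op W Lam v) f)).
End GFusion.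
End Hilbert.

(* Main.v *)
Require Import Defs.
From HB Require Import structures.
From mathcomp Require Import all_boot all_order all_algebra.
From mathcomp Require Import all_classical all_reals.
From mathcomp Require Import ereal esum.
From mathcomp Require complex.
From mathcomp Require Import ring lra.
Import complex.
Import Order.TTheory GRing.Theory Num.Theory.
Local Open Scope classical_set_scope.
Local Open Scope ring_scope.
Local Open Scope complex_scope.

Set Implicit Arguments.
Unset Strict Implicit.
Unset Printing Implicit Defensive.


Section CFacts.
Variable R : realType.
Lemma kReD (a b : R[i]) : complex.Re (a + b) = complex.Re a + complex.Re b.
Proof. by case: a; case: b. Qed.
Lemma kImD (a b : R[i]) : complex.Im (a + b) = complex.Im a + complex.Im b.
Proof. by case: a; case: b. Qed.
Lemma kReN (a : R[i]) : complex.Re (- a) = - complex.Re a.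
Proof. by case: a. Qed.
Lemma kImN (a : R[i]) : complex.Im (- a) = - complex.Im a.
Proof. by case: a. Qed.
Lemma kReB (a b : R[i]) : complex.Re (a - b) = complex.Re a - complex.Re b.
Proof. by rewrite kReD kReN. Qed.
Lemma kRe_real (r : R) : complex.Re (r%:C) = r.
Proof. by []. Qed.
Lemma kIm_real (r : R) : complex.Im (r%:C) = 0.
Proof. by []. Qed.
Lemma kReMr (r : R) (a : R[i]) : complex.Re (r%:C * a) = r * complex.Re a.
Proof. by case: a => x y /=; rewrite mul0r subr0. Qed.
Lemma kImMr (r : R) (a : R[i]) : complex.Im (r%:C * a) = r * complex.Im a.
Proof. by case: a => x y /=; rewrite mul0r addr0. Qed.
Lemma kRe_conj (a : R[i]) : complex.Re (conjc a) = complex.Re a.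
Proof. by case: a. Qed.
Lemma kIm_conj (a : R[i]) : complex.Im (conjc a) = - complex.Im a.
Proof. by case: a. Qed.
Lemma kRe_i (a : R[i]) : complex.Re ('i * a) = - complex.Im a.
Proof. by case: a => x y /=; rewrite !mul0r !mul1r sub0r. Qed.
Lemma kconj_i : conjc ('i : R[i]) = - 'i.
Proof. by rewrite /conjc /=; apply/eqP; rewrite eq_complex /= oppr0 !eqxx. Qed.
Lemma kconj_real (r : R) : conjc (r%:C) = r%:C.
Proof. by rewrite /conjc /= oppr0. Qed.
Lemma kcomplex_eqRI (a b : R[i]) : complex.Re a = complex.Re b -> complex.Im a = complex.Im b -> a = b.
Proof. by case: a; case: b => /= ? ? ? ? -> ->. Qed.
Lemma kge0_real (a : R[i]) : 0 <= a -> a = (complex.Re a)%:C /\ 0 <= complex.Re a.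
Proof.
case: a => x y; rewrite lecE /= => /andP[/eqP -> h]; split => //.
Qed.
End CFacts.
Section CFacts2.
Variable R : realType.
Lemma kconjcD (a b : R[i]) : conjc (a + b) = conjc a + conjc b.
Proof. by case: a => ? ?; case: b => ? ? /=; rewrite /conjc /= opprD. Qed.
Lemma kconjcM (a b : R[i]) : conjc (a * b) = conjc a * conjc b.
Proof.
case: a => x y; case: b => z w; rewrite /conjc /=.
by apply/eqP; rewrite eq_complex /= !mulrN !mulNr opprK opprD !eqxx.
Qed.
Lemma kconjcN (a : R[i]) : conjc (- a) = - conjc a.
Proof. by case: a => ? ?; rewrite /conjc. Qed.
Lemma kconjcK (a : R[i]) : conjc (conjc a) = a.
Proof. by case: a => ? ?; rewrite /conjc /= opprK. Qed.
End CFacts2.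


Section IP.
Variable R : realType.
Variable V : lmodType R[i].
Variable ip : V -> V -> R[i].
Hypothesis hip : is_inner_product ip.

Notation rip x y := (complex.Re (ip x y)).
Notation n2 := (nrm2 ip).

Lemma ipL a x y z : ip (a *: x + y) z = a * ip x z + ip y z.
Proof. by case: hip. Qed.
Lemma ipC x y : ip y x = conjc (ip x y).
Proof. by case: hip => _ []. Qed.
Lemma ip_ge0 x : 0 <= ip x x.
Proof. by case: hip => _ [] _ [] h _; apply: h. Qed.
Lemma ip_eq0 x : ip x x = 0 -> x = 0.
Proof. by case: hip => _ [] _ [] _ h; apply: h. Qed.

Lemma ip0l z : ip 0 z = 0.
Proof.
have := ipL 1 0 0 z; rewrite scaler0 addr0 mul1r => /eqP.
by rewrite -subr_eq0 opprD addrA subrr sub0r oppr_eq0 => /eqP.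
Qed.
Lemma ipDl x y z : ip (x + y) z = ip x z + ip y z.
Proof. by rewrite -(scale1r x) ipL mul1r scale1r. Qed.
Lemma ipZl a x z : ip (a *: x) z = a * ip x z.
Proof. by rewrite -[a *: x]addr0 ipL ip0l addr0. Qed.
Lemma ipNl x z : ip (- x) z = - ip x z.
Proof. by rewrite -scaleN1r ipZl mulN1r. Qed.
Lemma ipBl x y z : ip (x - y) z = ip x z - ip y z.
Proof. by rewrite ipDl ipNl. Qed.
Lemma ip0r z : ip z 0 = 0.
Proof. by rewrite ipC ip0l; apply/eqP; rewrite conjc_eq0. Qed.
Lemma ipDr x y z : ip z (x + y) = ip z x + ip z y.
Proof. by rewrite ipC ipDl kconjcD -!ipC. Qed.
Lemma ipZr a x z : ip z (a *: x) = conjc a * ip z x.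
Proof. by rewrite ipC ipZl kconjcM -ipC. Qed.
Lemma ipNr x z : ip z (- x) = - ip z x.
Proof. by rewrite -scaleN1r ipZr kconjcN conjc1 mulN1r. Qed.
Lemma ipBr x y z : ip z (x - y) = ip z x - ip z y.
Proof. by rewrite ipDr ipNr. Qed.

Lemma ripC x y : rip y x = rip x y.
Proof. by rewrite ipC kRe_conj. Qed.
Lemma ripDl x y z : rip (x + y) z = rip x z + rip y z.
Proof. by rewrite ipDl kReD. Qed.
Lemma ripDr x y z : rip z (x + y) = rip z x + rip z y.
Proof. by rewrite ipDr kReD. Qed.
Lemma ripNl x z : rip (- x) z = - rip x z.
Proof. by rewrite ipNl kReN. Qed.
Lemma ripNr x z : rip z (- x) = - rip z x.
Proof. by rewrite ipNr kReN. Qed.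
Lemma ripBl x y z : rip (x - y) z = rip x z - rip y z.
Proof. by rewrite ipBl kReB. Qed.
Lemma ripBr x y z : rip z (x - y) = rip z x - rip z y.
Proof. by rewrite ipBr kReB. Qed.
Lemma ripZl (r : R) x z : rip (r%:C *: x) z = r * rip x z.
Proof. by rewrite ipZl kReMr. Qed.
Lemma ripZr (r : R) x z : rip z (r%:C *: x) = r * rip z x.
Proof. by rewrite ipZr kconj_real kReMr. Qed.
Lemma rip0l z : rip 0 z = 0. Proof. by rewrite ip0l. Qed.
Lemma rip0r z : rip z 0 = 0. Proof. by rewrite ip0r. Qed.
Lemma Im_ip x y : complex.Im (ip x y) = rip x ('i *: y).
Proof. by rewrite ipZr kconj_i mulNr kReN kRe_i opprK. Qed.

Lemma ip_real x : ip x x = (n2 x)%:C.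
Proof. by case: (kge0_real (ip_ge0 x)). Qed.
Lemma n2_ge0 x : 0 <= n2 x.
Proof. by case: (kge0_real (ip_ge0 x)). Qed.
Lemma n2_eq0 x : n2 x = 0 -> x = 0.
Proof. by move=> h; apply: ip_eq0; rewrite ip_real h. Qed.
Lemma n2_0 : n2 0 = 0.
Proof. by rewrite /nrm2 ip0l. Qed.

Lemma ip_eq0_Re (x : V) : (forall z, rip x z = 0) -> x = 0.
Proof. by move=> h; apply: n2_eq0; apply: h. Qed.

Lemma n2D x y : n2 (x + y) = n2 x + 2 * rip x y + n2 y.
Proof.
rewrite /nrm2 ripDl !ripDr (ripC y x); lra.
Qed.
Lemma n2N x : n2 (- x) = n2 x.
Proof. by rewrite /nrm2 ripNl ripNr opprK. Qed.
Lemma n2B x y : n2 (x - y) = n2 x - 2 * rip x y + n2 y.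
Proof. by rewrite n2D n2N ripNr; lra. Qed.
Lemma n2Z (r : R) x : n2 (r%:C *: x) = r ^+ 2 * n2 x.
Proof. by rewrite /nrm2 ripZl ripZr mulrA expr2. Qed.
Lemma n2_i x : n2 ('i *: x) = n2 x.
Proof.
by rewrite /nrm2 ipZl ipZr kconj_i mulNr mulrN mulrA -expr2 sqr_i mulN1r opprK.
Qed.

Lemma rip_amgm (t : R) x y : 2 * t * rip x y <= t ^+ 2 * n2 x + n2 y.
Proof.
have := n2_ge0 (t%:C *: x - y).
rewrite n2B n2Z ripZl; lra.
Qed.

Lemma quad_ge0 (a b c : R) : 0 <= a -> 0 <= c ->
  (forall t, 2 * t * b <= t ^+ 2 * a + c) -> b ^+ 2 <= a * c.
Proof.
move=> a0 c0 h.
have [a0E|an0] := eqVneq a 0.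
  have hb : b = 0.
    apply/eqP; apply: contraT => bn0.
    have := h ((c + 1) / b); rewrite a0E mulr0 add0r -mulrA divfK //.
    lra.
  by rewrite a0E hb expr2 !mul0r.
have ap : 0 < a by rewrite lt_def an0.
have := h (b / a).
have -> : (b / a) ^+ 2 * a = b ^+ 2 / a by field.
have -> : 2 * (b / a) * b = 2 * (b ^+ 2 / a) by field.
move=> hh.
have : b ^+ 2 / a <= c by lra.
by rewrite ler_pdivrMr // mulrC.
Qed.

Lemma CS x y : rip x y ^+ 2 <= n2 x * n2 y.
Proof. by apply: quad_ge0; [apply: n2_ge0|apply: n2_ge0|move=> t; apply: rip_amgm]. Qed.

End IP.


Section Metric.
Variable R : realType.
Variable V : lmodType R[i].
Variable ip : V -> V -> R[i].
Hypothesis hip : is_inner_product ip.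
Notation rip x y := (complex.Re (ip x y)).
Notation n2 := (nrm2 ip).

Lemma nrm_lt x e : 0 < e -> (nrm ip x < e) <-> (n2 x < e ^+ 2).
Proof.
move=> e0; rewrite /nrm.
have -> : e = Num.sqrt (e ^+ 2) by rewrite sqrtr_sqr gtr0_norm.
rewrite ltr_sqrt ?exprn_gt0 // sqrtr_sqr gtr0_norm //.
Qed.

Lemma n2_par x y : n2 (x + y) + n2 (x - y) = 2 * n2 x + 2 * n2 y.
Proof. rewrite (n2D hip) (n2B hip); lra. Qed.

Lemma n2_le2 x y : n2 (x + y) <= 2 * n2 x + 2 * n2 y.
Proof. have := n2_par x y; have := n2_ge0 hip (x - y); lra. Qed.

Lemma n2_le2B x y z : n2 (x - z) <= 2 * n2 (x - y) + 2 * n2 (y - z).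
Proof. have -> : x - z = (x - y) + (y - z) by rewrite addrA subrK. exact: n2_le2. Qed.

Lemma n2_sym x y : n2 (x - y) = n2 (y - x).
Proof. by rewrite -(n2N hip) opprB. Qed.

Definition cvg2 (u : nat -> V) l :=
  forall e, 0 < e -> exists N, forall n, (N <= n)%N -> n2 (u n - l) < e.

Lemma cvg2P u l : Defs.cvg_to ip u l <-> cvg2 u l.
Proof.
split => h e e0.
  have se0 : 0 < Num.sqrt e by rewrite sqrtr_gt0.
  have [N hN] := h (Num.sqrt e) se0.
  exists N => n /hN; rewrite nrm_lt ?sqrtr_gt0 // sqr_sqrtr //; exact: ltW.
have [N hN] := h (e ^+ 2) (exprn_gt0 _ e0).
by exists N => n /hN; rewrite nrm_lt.
Qed.

Lemma cvg2_unique u l l' : cvg2 u l -> cvg2 u l' -> l = l'.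
Proof.
move=> h h'; apply/eqP; rewrite -subr_eq0; apply/eqP.
apply: (n2_eq0 hip); apply/eqP; rewrite eq_le n2_ge0 // andbT.
apply/ler_addgt0Pr => e e0.
have e4 : 0 < e / 4 by rewrite divr_gt0.
have [N hN] := h _ e4; have [N' hN'] := h' _ e4.
have := hN (maxn N N') (leq_maxl _ _); have := hN' (maxn N N') (leq_maxr _ _).
have := n2_le2B l (u (maxn N N')) l'; rewrite (n2_sym l (u _)).
lra.
Qed.

Lemma complete2 : complete_ip ip -> forall u : nat -> V,
  (forall e, 0 < e -> exists N, forall m n, (N <= m)%N -> (N <= n)%N -> n2 (u m - u n) < e) ->
  exists l, cvg2 u l.
Proof.
move=> hc u hu.
suff [l hl] : exists l, Defs.cvg_to ip u l by exists l; apply/cvg2P.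
apply: hc => e e0; have [N hN] := hu _ (exprn_gt0 2 e0).
by exists N => m n hm hn; rewrite nrm_lt //; apply: hN.
Qed.

Lemma rip_le x y : rip x y <= (n2 x + n2 y) / 2.
Proof. have := rip_amgm hip 1 x y; rewrite expr1n; lra. Qed.

Lemma rip_cvg u l z : cvg2 u l -> forall e, 0 < e -> exists N, forall n, (N <= n)%N ->
  `| rip (u n) z - rip l z | < e.
Proof.
move=> h e e0.
have hz := n2_ge0 hip z.
pose d := e ^+ 2 / (n2 z + 1).
have d0 : 0 < d by rewrite divr_gt0 // ?exprn_gt0 //; lra.
have [N hN] := h d d0; exists N => n /hN hn.
rewrite -(ripBl hip); have := CS hip (u n - l) z.
move=> hcs.
have : rip (u n - l) z ^+ 2 < e ^+ 2.
  apply: (le_lt_trans hcs).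
  have : n2 (u n - l) * n2 z <= d * n2 z by rewrite ler_wpM2r // ltW.
  suff : d * n2 z < e ^+ 2 by lra.
  rewrite /d mulrAC ltr_pdivrMr; last by lra.
  have : 0 < e ^+ 2 by rewrite exprn_gt0.
  nra.
by rewrite -real_normK ?num_real // ltr_pXn2r // ?nnegrE ?normr_ge0 // ltW.
Qed.
End Metric.


Lemma archi_inv (R : realType) (e : R) : 0 < e ->
  exists N, forall n, (N <= n)%N -> (n.+1%:R)^-1 < e.
Proof.
move=> e0; exists (Num.trunc e^-1) => n hn.
have h1 := truncnS_gt e^-1.
have h2 : (Num.trunc e^-1).+1%:R <= n.+1%:R :> R by rewrite ler_nat ltnS.
rewrite -(invrK e) ltf_pV2 ?posrE ?invr_gt0 //.
exact: lt_le_trans h1 h2.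
Qed.

Lemma two_scale (R : realType) (V : lmodType R[i]) (f : V) : (2%:R : R)%:C *: f = f + f.
Proof. by rewrite rmorph_nat scaler_nat mulr2n. Qed.

Lemma subBB (V : zmodType) (a b c : V) : (a - b) - (a - c) = c - b.
Proof. by rewrite opprB addrC addrA subrK. Qed.

Section Proj.
Variable R : realType.
Variable V : lmodType R[i].
Variable ip : V -> V -> R[i].
Hypothesis hip : is_inner_product ip.
Hypothesis hcomp : complete_ip ip.
Notation rip x y := (complex.Re (ip x y)).
Notation n2 := (nrm2 ip).

Variable W : set V.
Hypothesis hW : closed_subspace ip W.

Lemma W0 : W 0. Proof. by case: hW. Qed.
Lemma WL a x y : W x -> W y -> W (a *: x + y).
Proof. by case: hW => _ [h _]; apply: h. Qed.
Lemma WD x y : W x -> W y -> W (x + y).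
Proof. by move=> hx hy; rewrite -(scale1r x); apply: WL. Qed.
Lemma WZ a x : W x -> W (a *: x).
Proof. by move=> hx; rewrite -(addr0 (a *: x)); apply: WL => //; apply: W0. Qed.
Lemma WN x : W x -> W (- x).
Proof. by move=> hx; rewrite -scaleN1r; apply: WZ. Qed.
Lemma WB x y : W x -> W y -> W (x - y).
Proof. by move=> hx hy; apply: WD => //; apply: WN. Qed.
Lemma Wlim u l : (forall n, W (u n)) -> cvg2 ip u l -> W l.
Proof. by case: hW => _ [_ h] hu /cvg2P hl; apply: h hu hl. Qed.

Lemma orth_of_min x f : W x -> (forall w, W w -> n2 (f - x) <= n2 (f - w)) ->
  forall w, W w -> ip (f - x) w = 0.
Proof.
move=> hx hmin.
have hre : forall w, W w -> rip (f - x) w = 0.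
  move=> w hw.
  have : rip (f - x) w ^+ 2 <= n2 w * 0.
    apply: quad_ge0; [exact: n2_ge0|by []|] => t.
    have := hmin (t%:C *: w + x) (WL _ hw hx).
    have -> : f - (t%:C *: w + x) = (f - x) - t%:C *: w.
      by rewrite opprD addrA addrAC.
    rewrite (n2B hip (f - x) (t%:C *: w)) (n2Z hip) (ripZr hip); lra.
  rewrite mulr0 => h; apply/eqP; rewrite -sqrf_eq0 eq_le h sqr_ge0 //.
move=> w hw; apply: kcomplex_eqRI; first by rewrite hre.
by rewrite (Im_ip hip) hre //; apply: WZ.
Qed.

Lemma proj_exists f : exists x, W x /\ forall w, W w -> ip (f - x) w = 0.
Proof.
pose E := [set r | exists w, W w /\ r = n2 (f - w)].
have E0 : E !=set0 by exists (n2 (f - 0)); exists 0; split => //; apply: W0.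
have Elb : has_lbound E by exists 0 => r [w [_ ->]]; apply: n2_ge0.
pose d := inf E.
have dle : forall w, W w -> d <= n2 (f - w).
  by move=> w hw; apply: ge_inf => //; exists w.
have hex : forall n : nat, exists w, W w /\ n2 (f - w) < d + (n.+1%:R)^-1.
  move=> n; have hn : 0 < (n.+1%:R : R)^-1 by rewrite invr_gt0 ltr0Sn.
  have [r [w [hw ->]] hr] := inf_adherent hn (conj E0 Elb).
  by exists w.
have [w hw] := choice hex.
have hd0 : forall x y, W x -> W y -> 4 * d <= n2 ((f - x) + (f - y)).
  move=> x y hx hy.
  have -> : (f - x) + (f - y) = (2%:R : R)%:C *: (f - ((2%:R : R)^-1)%:C *: (x + y)).
    by rewrite scalerBr scalerA -rmorphM /= mulfV ?pnatr_eq0 // scale1r two_scale opprD !addrA [f - x + f]addrAC.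
  rewrite (n2Z hip); have := dle _ (WZ ((2%:R : R)^-1)%:C (WD hx hy)); rewrite expr2; lra.
have hc : forall n m, n2 (w n - w m) <= 2 * (n.+1%:R)^-1 + 2 * (m.+1%:R)^-1.
  move=> n m; have := n2_par hip (f - w m) (f - w n).
  have -> : f - w m - (f - w n) = w n - w m.
    by rewrite opprB addrC addrA subrK.
  have := hd0 _ _ (hw m).1 (hw n).1; have := (hw m).2; have := (hw n).2; clearbody d; move: (n.+1%:R : R)^-1 (m.+1%:R : R)^-1 => a b; lra.
have [x hx] : exists x, cvg2 ip w x.
  apply: (complete2 hcomp) => e e0.
  have e4 : 0 < e / 4 by rewrite divr_gt0.
  have [N hN] := archi_inv e4; exists N => m n hm hn.
  have := hc m n; have := hN _ hm; have := hN _ hn; move: (m.+1%:R : R)^-1 (n.+1%:R : R)^-1 => a b; lra.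
have Wx : W x by apply: (Wlim (fun n => (hw n).1) hx).
exists x; split => //; apply: orth_of_min => //.
suff hle : n2 (f - x) <= d by move=> w' hw'; apply: le_trans hle (dle _ hw').
apply/ler_addgt0Pr => e e0.
have e3 : 0 < e / 3 by rewrite divr_gt0.
have hcv : cvg2 ip (fun n => f - w n) (f - x).
  move=> e' e'0; have [N hN] := hx e' e'0; exists N => n /hN.
  by rewrite subBB (n2_sym hip).
have [N1 hN1] := rip_cvg hip (f - x) hcv e3.
have [N2 hN2] := archi_inv e3.
pose n := maxn N1 N2.
have := hN1 n (leq_maxl _ _); rewrite ltr_norml => /andP[h1 h2].
have := hN2 n (leq_maxr _ _).
have := (hw n).2.
have := rip_le hip (f - w n) (f - x).
rewrite /nrm2 in h1 h2 *; clearbody d; move: (n.+1%:R : R)^-1 => a.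
lra.
Qed.
End Proj.


Section OProj.
Variable R : realType.
Variable V : lmodType R[i].
Variable ip : V -> V -> R[i].
Hypothesis hip : is_inner_product ip.
Hypothesis hcomp : complete_ip ip.
Notation rip x y := (complex.Re (ip x y)).
Notation n2 := (nrm2 ip).
Variable W : set V.
Hypothesis hW : closed_subspace ip W.
Notation P := (oproj ip W).

Lemma oproj_spec f : W (P f) /\ forall w, W w -> ip (f - P f) w = 0.
Proof.
exact: (xgetPex 0 (proj_exists hip hcomp hW f)).
Qed.

Lemma ip_eq_self x y : (forall z, ip z x = ip z y) -> x = y.
Proof.
move=> h; apply/eqP; rewrite -subr_eq0; apply/eqP; apply: (ip_eq0 hip).
by rewrite (ipBr hip) h subrr.
Qed.

Lemma oproj_unique f x : W x -> (forall w, W w -> ip (f - x) w = 0) -> P f = x.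
Proof.
move=> hx hox; have [hp hop] := oproj_spec f.
apply/eqP; rewrite -subr_eq0; apply/eqP; apply: (ip_eq0 hip).
have hw : W (P f - x) by apply: (WB hW).
have e : P f - x = (f - x) - (f - P f) by rewrite subBB.
rewrite {1}e.
by rewrite (ipBl hip) hox // hop // subrr.
Qed.

Lemma oproj_id f : W f -> P f = f.
Proof. by move=> hf; apply: oproj_unique => // w _; rewrite subrr (ip0l hip). Qed.

Lemma oprojL a f g : P (a *: f + g) = a *: P f + P g.
Proof.
have [hp1 ho1] := oproj_spec f; have [hp2 ho2] := oproj_spec g.
apply: oproj_unique; first by apply: (WL hW).
move=> w hw.
have -> : a *: f + g - (a *: P f + P g) = a *: (f - P f) + (g - P g).
  by rewrite scalerBr opprD !addrA; congr (_ + _); rewrite addrAC.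
by rewrite (ipL hip) ho1 // ho2 // mulr0 addr0.
Qed.

Lemma oproj0 : P 0 = 0.
Proof. by apply: oproj_id; apply: (W0 hW). Qed.

Lemma ip_oproj_l f g : ip (P f) g = ip (P f) (P g).
Proof.
have [hp1 ho1] := oproj_spec f; have [hp2 ho2] := oproj_spec g.
have := ho2 _ hp1; rewrite (ipBl hip) => /eqP; rewrite subr_eq0 => /eqP h.
by rewrite (ipC hip) h -(ipC hip).
Qed.

Lemma ip_oproj_r f g : ip f (P g) = ip (P f) (P g).
Proof.
have [hp1 ho1] := oproj_spec f; have [hp2 ho2] := oproj_spec g.
have := ho1 _ hp2; rewrite (ipBl hip) => /eqP; rewrite subr_eq0 => /eqP h.
by rewrite h.
Qed.

Lemma ip_oproj f g : ip (P f) g = ip f (P g).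
Proof. by rewrite ip_oproj_l [RHS]ip_oproj_r. Qed.
End OProj.


Section Riesz.
Variable R : realType.
Variable V : lmodType R[i].
Variable ip : V -> V -> R[i].
Hypothesis hip : is_inner_product ip.
Hypothesis hcomp : complete_ip ip.
Notation rip x y := (complex.Re (ip x y)).
Notation n2 := (nrm2 ip).

Variable phi : V -> R[i].
Hypothesis phiL : forall a x y, phi (a *: x + y) = a * phi x + phi y.
Variable C : R.
Hypothesis C0 : 0 < C.
Hypothesis phiB : forall f, complex.Re (phi f) ^+ 2 <= C * n2 f.

Lemma phi0 : phi 0 = 0.
Proof.
have := phiL 1 0 0; rewrite scaler0 addr0 mul1r => /eqP.
by rewrite -subr_eq0 opprD addrA subrr sub0r oppr_eq0 => /eqP.
Qed.
Lemma phiZ a x : phi (a *: x) = a * phi x.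
Proof. by rewrite -[a *: x]addr0 phiL phi0 addr0. Qed.
Lemma phiD x y : phi (x + y) = phi x + phi y.
Proof. by rewrite -{1}[x]scale1r phiL mul1r. Qed.
Lemma phiB' x y : phi (x - y) = phi x - phi y.
Proof. by rewrite phiD -scaleN1r phiZ mulN1r. Qed.

Lemma phi_small l z : phi z = phi l ->
  complex.Re (phi l) ^+ 2 <= C * n2 z /\ complex.Im (phi l) ^+ 2 <= C * n2 z.
Proof.
move=> e; split; first by rewrite -e; apply: phiB.
have := phiB ('i *: z); rewrite phiZ e (n2_i hip) kRe_i sqrrN //.
Qed.

Lemma sq_small (a : R) (b : nat -> R) : (forall n, a ^+ 2 <= C * b n) ->
  (forall e, 0 < e -> exists n, b n < e) -> a = 0.
Proof.
move=> h hb; apply/eqP; rewrite -sqrf_eq0 eq_le sqr_ge0 andbT.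
apply/ler_addgt0Pr => e e0; rewrite add0r.
have [n hn] := hb (e / C) (divr_gt0 e0 C0).
apply: (le_trans (h n)); rewrite -ler_pdivlMl //.
by rewrite mulrC ltW.
Qed.

Definition Nker := [set f | phi f = 0].

Lemma Nker_closed : closed_subspace ip Nker.
Proof.
split; first exact: phi0.
split; first by move=> a x y; rewrite /Nker /= => hx hy; rewrite phiL hx hy mulr0 addr0.
move=> u l hu /cvg2P hl.
have key : forall n, phi (l - u n) = phi l by move=> n; rewrite phiB' hu subr0.
have hb : forall e, 0 < e -> exists n, n2 (l - u n) < e.
  move=> e e0; have [N hN] := hl e e0; exists N.
  by rewrite (n2_sym hip); apply: hN.
apply: kcomplex_eqRI.
  apply: (sq_small (b := fun n => n2 (l - u n))) => // n.
  by case: (phi_small (key n)).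
apply: (sq_small (b := fun n => n2 (l - u n))) => // n.
by case: (phi_small (key n)).
Qed.

Lemma riesz : exists x, forall f, phi f = ip f x.
Proof.
have [hall|] := pselect (forall f, phi f = 0).
  by exists 0 => f; rewrite hall (ip0r hip).
move=> /existsNP [f0 hf0].
have hN := Nker_closed.
have [hp ho] := oproj_spec hip hcomp hN f0.
set z := f0 - oproj ip Nker f0 in ho.
have phiz : phi z = phi f0 by rewrite /z phiB' hp subr0.
have zn0 : ip z z != 0.
  apply/negP => /eqP /(ip_eq0 hip) z0; apply: hf0; by rewrite -phiz z0 phi0.
have pz : phi z != 0 by rewrite phiz; apply/eqP.
exists (conjc (phi z / ip z z) *: z) => f.
rewrite (ipZr hip) kconjcK.
have hf : Nker (f - (phi f / phi z) *: z).
  by rewrite /Nker /= phiB' phiZ divfK // subrr.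
have := ho _ hf; rewrite (ipBr hip) (ipZr hip) => /eqP; rewrite subr_eq0 => /eqP h.
have h' : ip f z = phi f / phi z * ip z z.
  by rewrite (ipC hip) h (kconjcM (conjc (phi f / phi z))) kconjcK -(ipC hip).
rewrite h'.
by field; rewrite zn0 pz.
Qed.
End Riesz.


Section Adjoint.
Variable R : realType.
Variable H : lmodType R[i].
Variable ipH : H -> H -> R[i].
Hypothesis hipH : is_inner_product ipH.
Hypothesis hcompH : complete_ip ipH.
Variable K : lmodType R[i].
Variable ipK : K -> K -> R[i].
Hypothesis hipK : is_inner_product ipK.
Variable Lam : H -> K.
Hypothesis hL : bounded_op ipH ipK Lam.

Lemma LamL a x y : Lam (a *: x + y) = a *: Lam x + Lam y.
Proof. by case: hL => h _; apply: h. Qed.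

Lemma Lam0 : Lam 0 = 0.
Proof.
have := LamL 1 0 0; rewrite scaler0 addr0 scale1r => /eqP.
by rewrite -subr_eq0 opprD addrA subrr sub0r oppr_eq0 => /eqP.
Qed.
Lemma LamZ a x : Lam (a *: x) = a *: Lam x.
Proof. by rewrite -[a *: x]addr0 LamL Lam0 addr0. Qed.
Lemma LamD x y : Lam (x + y) = Lam x + Lam y.
Proof. by rewrite -{1}[x]scale1r LamL scale1r. Qed.

Lemma Lam_bound : exists M, 0 < M /\ forall f, nrm2 ipK (Lam f) <= M * nrm2 ipH f.
Proof.
case: hL => _ [M0 hM0]; exists (M0 ^+ 2 + 1); split.
  by have := sqr_ge0 M0; lra.
move=> f; have := hM0 f; rewrite /nrm => h.
have a0 := n2_ge0 hipK (Lam f); have b0 := n2_ge0 hipH f.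
have s1 := sqrtr_ge0 (nrm2 ipK (Lam f)).
have e1 := sqr_sqrtr a0; have e2 := sqr_sqrtr b0.
have : nrm2 ipK (Lam f) <= M0 ^+ 2 * nrm2 ipH f.
  rewrite -e1 -e2 -exprMn; rewrite ler_pXn2r ?nnegrE //.
  exact: le_trans s1 h.
move=> hh; have := mulr_ge0 (sqr_ge0 M0) b0; nra.
Qed.

Notation adj := (adjoint ipH ipK Lam).

Lemma adj_spec y f : ipK (Lam f) y = ipH f (adj y).
Proof.
have [M [M0 hM]] := Lam_bound.
have hy := n2_ge0 hipK y.
have hex : exists x, forall f, ipK (Lam f) y = ipH f x.
  apply: (@riesz _ _ ipH hipH hcompH (fun f => ipK (Lam f) y) _ (M * nrm2 ipK y + 1)).
  - by move=> a x z; rewrite LamL (ipL hipK).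
  - by have := mulr_ge0 (ltW M0) hy; lra.
  - move=> g; apply: le_trans (CS hipK (Lam g) y) _.
    have := hM g; have := n2_ge0 hipH g; have := n2_ge0 hipK (Lam g).
    nra.
exact: (xgetPex 0 hex).
Qed.

Lemma adjL a y y' : adj (a *: y + y') = a *: adj y + adj y'.
Proof.
apply: (ip_eq_self hipH) => z.
by rewrite -adj_spec (ipDr hipK) (ipZr hipK) (ipDr hipH) (ipZr hipH) -!adj_spec.
Qed.
End Adjoint.


Section FSum.
Variable J : choiceType.

Lemma fsum_morph (V : zmodType) (W : zmodType) (phi : V -> W)
  (phiD : forall x y, phi (x + y) = phi x + phi y) (phi0 : phi 0 = 0)
  (X : set J) (F : J -> V) : finite_set X ->
  phi (\sum_(j \in X) F j) = \sum_(j \in X) phi (F j).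
Proof.
move=> fX; rewrite !fsbig_finite //.
by apply: (big_morph phi phiD phi0).
Qed.

Lemma fsumU (V : zmodType) (X Y : set J) (F : J -> V) : finite_set X -> finite_set Y ->
  X `&` Y = set0 -> \sum_(j \in X `|` Y) F j = \sum_(j \in X) F j + \sum_(j \in Y) F j.
Proof. by move=> fX fY h; apply: fsbigU0 => //; rewrite h. Qed.

Lemma fsum_split (V : zmodType) (X : set J) (F G : J -> V) : finite_set X ->
  \sum_(j \in X) (F j + G j) = \sum_(j \in X) F j + \sum_(j \in X) G j.
Proof. by move=> fX; rewrite !fsbig_finite // big_split. Qed.

Lemma fsum_scale (R : pzRingType) (V : lmodType R) (X : set J) a (F : J -> V) : finite_set X ->
  \sum_(j \in X) (a *: F j) = a *: \sum_(j \in X) F j.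
Proof. by move=> fX; rewrite !fsbig_finite // scaler_sumr. Qed.

Lemma fsum_le (R : numDomainType) (X : set J) (F G : J -> R) : finite_set X ->
  (forall j, F j <= G j) -> \sum_(j \in X) F j <= \sum_(j \in X) G j.
Proof. by move=> fX h; rewrite !fsbig_finite //; apply: ler_sum => j _. Qed.

Lemma fsum_ge0 (R : numDomainType) (X : set J) (F : J -> R) :
  (forall j, 0 <= F j) -> 0 <= \sum_(j \in X) F j.
Proof. by move=> h; apply: fsumr_ge0 => j _. Qed.

Lemma fsum_sub (R : numDomainType) (X Y : set J) (F : J -> R) : finite_set Y ->
  X `<=` Y -> (forall j, 0 <= F j) -> \sum_(j \in X) F j <= \sum_(j \in Y) F j.
Proof.
move=> fY sXY h; rewrite -(setDUK sXY) fsumU.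
- by rewrite lerDl; apply: fsum_ge0.
- exact: sub_finite_set fY.
- exact: finite_setD.
- exact: setDIK.
Qed.

Fixpoint cumul (X : nat -> set J) n : set J :=
  if n is m.+1 then cumul X m `|` X n else X 0.

Lemma cumul_fin X n : (forall k, finite_set (X k)) -> finite_set (cumul X n).
Proof. by move=> h; elim: n => [|n IH] //=; rewrite finite_setU. Qed.

Lemma cumul_sub X n : X n `<=` cumul X n.
Proof. by case: n => [|n] //= x hx; right. Qed.

Lemma cumul_mono X n m : (n <= m)%N -> cumul X n `<=` cumul X m.
Proof.
elim: m => [|m IH]; first by rewrite leqn0 => /eqP ->.
rewrite leq_eqVlt => /orP [/eqP -> //|]; rewrite ltnS => /IH h x hx /=.
by left; apply: h.
Qed.

Lemma disj_sub (X G A : set J) : X `<=` G -> X `&` (A `\` G) = set0.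
Proof. by move=> h; rewrite -subset0 => x [hx [_ hnx]]; apply: hnx; apply: h. Qed.
End FSum.

Section HSum.
Variable R : realType.
Variable V : lmodType R[i].
Variable ip : V -> V -> R[i].
Hypothesis hip : is_inner_product ip.
Hypothesis hcomp : complete_ip ip.
Notation rip x y := (complex.Re (ip x y)).
Notation n2 := (nrm2 ip).
Variable J : choiceType.

Definition hsum2 (F : J -> V) s := forall e, 0 < e -> exists X0 : set J, finite_set X0 /\
  forall X, finite_set X -> X0 `<=` X -> n2 (\sum_(j \in X) F j - s) < e.

Lemma hsum2P F s : hsum_to ip F s <-> hsum2 F s.
Proof.
split => h e e0.
  have se0 : 0 < Num.sqrt e by rewrite sqrtr_gt0.
  have [X0 [f0 hX]] := h _ se0; exists X0; split => // X fX sX.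
  have := hX X fX sX; rewrite nrm_lt // sqr_sqrtr //; exact: ltW.
have [X0 [f0 hX]] := h _ (exprn_gt0 2 e0); exists X0; split => // X fX sX.
by rewrite nrm_lt //; apply: hX.
Qed.

Lemma hsum_conv (F : J -> V) :
  (forall e, 0 < e -> exists X, finite_set X /\ forall Y, finite_set Y ->
     X `&` Y = set0 -> n2 (\sum_(j \in Y) F j) < e) ->
  exists s, hsum_to ip F s.
Proof.
move=> h.
have hX : forall n : nat, exists X, finite_set X /\ forall Y, finite_set Y ->
     X `&` Y = set0 -> n2 (\sum_(j \in Y) F j) < (n.+1%:R)^-1.
  by move=> n; apply: h; rewrite invr_gt0 ltr0Sn.
have [Xs hXs] := choice hX.
pose G := cumul Xs.
have fG : forall n, finite_set (G n) by move=> n; apply: cumul_fin => k; case: (hXs k).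
pose u n := \sum_(j \in G n) F j.
have hdiff : forall n m, (n <= m)%N -> n2 (u m - u n) < (n.+1%:R)^-1.
  move=> n m nm; rewrite /u /G -(setDUK (@cumul_mono _ Xs _ _ nm)) fsumU //.
  - rewrite addrAC subrr add0r; apply: (hXs n).2; first exact: finite_setD.
    exact: disj_sub (@cumul_sub _ _ _).
  - exact: finite_setD.
  - exact: setDIK.
have [s hs] : exists s, cvg2 ip u s.
  apply: (complete2 hcomp) => e e0.
  have e4 : 0 < e / 4 by rewrite divr_gt0.
  have [N hN] := archi_inv e4; exists N => m n hm hn.
  have h1 := hdiff _ _ hm; have h2 := hdiff _ _ hn.
  have := n2_le2B hip (u m) (u N) (u n); rewrite [n2 (u N - u n)](n2_sym hip).
  move: h1 h2 (hN N (leqnn N)); move: (N.+1%:R : R)^-1 => a; lra.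
exists s; apply/hsum2P => e e0.
have e4 : 0 < e / 4 by rewrite divr_gt0.
have [N1 hN1] := hs _ e4; have [N2 hN2] := archi_inv e4.
pose N := maxn N1 N2.
exists (G N); split => // A fA sA.
rewrite -(setDUK sA) fsumU //.
- have h1 : n2 (\sum_(j \in A `\` G N) F j) < (N.+1%:R)^-1.
    apply: (hXs N).2; first exact: finite_setD.
    exact: disj_sub (@cumul_sub _ _ _).
  have h2 := hN1 N (leq_maxl _ _); have h3 := hN2 N (leq_maxr _ _).
  have := n2_le2 hip (\sum_(j \in A `\` G N) F j) (u N - s).
  rewrite addrA [_ + u N]addrC -/(u N).
  move: h1 h3; move: (N.+1%:R : R)^-1 => a; lra.
- exact: finite_setD.
- exact: setDIK.
Qed.
End HSum.


Section Net.
Variable R : realType.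
Variable J : choiceType.

Definition netlim (a : set J -> R) (al : R) := forall e, 0 < e -> exists X0 : set J,
  finite_set X0 /\ forall X, finite_set X -> X0 `<=` X -> `|a X - al| < e.

Lemma netlim_le a al c : netlim a al -> (forall X, finite_set X -> a X <= c) -> al <= c.
Proof.
move=> h hc; apply/ler_addgt0Pr => e e0.
have [X0 [f0 hX]] := h e e0; have := hX X0 f0 (@subset_refl _ X0).
rewrite ltr_norml => /andP [h1 h2]; have := hc X0 f0; lra.
Qed.

Lemma netlim_ge a al c : netlim a al -> (forall X, finite_set X -> c <= a X) -> c <= al.
Proof.
move=> h hc; apply/ler_addgt0Pr => e e0.
have [X0 [f0 hX]] := h e e0; have := hX X0 f0 (@subset_refl _ X0).
rewrite ltr_norml => /andP [h1 h2]; have := hc X0 f0; lra.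
Qed.

Lemma netlim_unique a al be : netlim a al -> netlim a be -> al = be.
Proof.
move=> h1 h2.
have key : forall al be, netlim a al -> netlim a be -> al <= be.
  move=> x y hx hy; apply/ler_addgt0Pr => e e0.
  have e2 : 0 < e / 2 by rewrite divr_gt0.
  have [X0 [f0 hX]] := hx _ e2; have [X1 [f1 hY]] := hy _ e2.
  have fU : finite_set (X0 `|` X1) by rewrite finite_setU.
  have := hX _ fU (@subsetUl _ _ _); have := hY _ fU (@subsetUr _ _ _).
  rewrite !ltr_norml => /andP [? ?] /andP [? ?]; lra.
by apply/eqP; rewrite eq_le !key.
Qed.

Lemma netlim_ext a b al : (forall X, finite_set X -> a X = b X) -> netlim a al -> netlim b al.
Proof.
move=> e h e' e'0; have [X0 [f0 hX]] := h e' e'0; exists X0; split => // X fX sX.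
by rewrite -e //; apply: hX.
Qed.
End Net.

Section HSum2.
Variable R : realType.
Variable V : lmodType R[i].
Variable ip : V -> V -> R[i].
Hypothesis hip : is_inner_product ip.
Notation rip x y := (complex.Re (ip x y)).
Notation n2 := (nrm2 ip).
Variable J : choiceType.

Lemma rip_small x g e : 0 < e -> n2 x < e ^+ 2 / (n2 g + 1) -> `|rip x g| < e.
Proof.
move=> e0 hx.
have hz := n2_ge0 hip g; have hx0 := n2_ge0 hip x.
have hcs := CS hip x g.
have : rip x g ^+ 2 < e ^+ 2.
  apply: (le_lt_trans hcs).
  have : n2 x * (n2 g + 1) < e ^+ 2 by rewrite -ltr_pdivlMr //; lra.
  nra.
by rewrite -real_normK ?num_real // ltr_pXn2r // ?nnegrE ?normr_ge0 // ltW.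
Qed.

Lemma hsum_unique (F : J -> V) s s' : hsum_to ip F s -> hsum_to ip F s' -> s = s'.
Proof.
move=> /hsum2P h /hsum2P h'.
apply/eqP; rewrite -subr_eq0; apply/eqP; apply: (n2_eq0 hip).
apply/eqP; rewrite eq_le n2_ge0 // andbT.
apply/ler_addgt0Pr => e e0; rewrite add0r.
have e4 : 0 < e / 4 by rewrite divr_gt0.
have [X0 [f0 hX]] := h _ e4; have [X1 [f1 hY]] := h' _ e4.
have fU : finite_set (X0 `|` X1) by rewrite finite_setU.
have := hX _ fU (@subsetUl _ _ _); have := hY _ fU (@subsetUr _ _ _).
have := n2_le2B hip s (\sum_(j \in X0 `|` X1) F j) s'.
rewrite (n2_sym hip s (\sum_(j \in X0 `|` X1) F j)); lra.
Qed.

Lemma fsum_rip (X : set J) (F : J -> V) g : finite_set X ->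
  rip (\sum_(j \in X) F j) g = \sum_(j \in X) rip (F j) g.
Proof.
move=> fX; apply: (fsum_morph (phi := fun x => rip x g)) => //.
- by move=> x y; rewrite (ripDl hip).
- by rewrite (rip0l hip).
Qed.

Lemma hsum_rip (F : J -> V) s g : hsum_to ip F s ->
  netlim (fun X => \sum_(j \in X) rip (F j) g) (rip s g).
Proof.
move=> /hsum2P h e e0.
have d0 : 0 < e ^+ 2 / (n2 g + 1).
  by rewrite divr_gt0 ?exprn_gt0 //; have := n2_ge0 hip g; lra.
have [X0 [f0 hX]] := h _ d0; exists X0; split => // X fX sX.
rewrite -fsum_rip // -(ripBl hip); apply: rip_small => //; exact: hX.
Qed.

Lemma n2Zc a x : n2 (a *: x) = complex.Re (a * conjc a) * n2 x.
Proof.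
rewrite /nrm2 (ipZl hip) (ipZr hip) mulrA (ip_real hip).
by case: (a * conjc a) => p q /=; rewrite mulr0 subr0.
Qed.
Lemma ReMconj_ge0 (a : R[i]) : 0 <= complex.Re (a * conjc a).
Proof. case: a => p q /=; rewrite mulrN opprK -!expr2; apply: addr_ge0; exact: sqr_ge0. Qed.

Lemma hsum_lin (F G : J -> V) s t a : hsum_to ip F s -> hsum_to ip G t ->
  hsum_to ip (fun j => a *: F j + G j) (a *: s + t).
Proof.
move=> /hsum2P h /hsum2P h'; apply/hsum2P => e e0.
pose k := complex.Re (a * conjc a).
have k0 : 0 <= k by apply: ReMconj_ge0.
have d0 : 0 < e / (4 * (k + 1)) by rewrite divr_gt0 //; lra.
have e4 : 0 < e / 4 by rewrite divr_gt0.
have [X0 [f0 hX]] := h _ d0; have [X1 [f1 hY]] := h' _ e4.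
have fU : finite_set (X0 `|` X1) by rewrite finite_setU.
exists (X0 `|` X1); split => // X fX sX.
have h1 := hX X fX (subset_trans (@subsetUl _ _ _) sX).
have h2 := hY X fX (subset_trans (@subsetUr _ _ _) sX).
rewrite fsum_split // fsum_scale //.
have -> : a *: \sum_(j \in X) F j + \sum_(j \in X) G j - (a *: s + t) =
   a *: (\sum_(j \in X) F j - s) + (\sum_(j \in X) G j - t).
  by rewrite scalerBr opprD !addrA; congr (_ + _); rewrite addrAC.
apply: le_lt_trans (n2_le2 hip _ _) _.
rewrite n2Zc -/k.
have hk : k * n2 (\sum_(j \in X) F j - s) <= (k + 1) * (e / (4 * (k + 1))).
  apply: ler_pM => //; first exact: n2_ge0; first by lra.
  exact: ltW.
have : (k + 1) * (e / (4 * (k + 1))) = e / 4 by field; lra.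
lra.
Qed.
End HSum2.


Section Frame.
Variable R : realType.
Variable J : countType.
Variable H : lmodType R[i].
Variable ipH : H -> H -> R[i].
Hypothesis hipH : is_inner_product ipH.
Hypothesis hcompH : complete_ip ipH.
Variable K : J -> lmodType R[i].
Variable ipK : forall j, K j -> K j -> R[i].
Hypothesis hipK : forall j, is_inner_product (@ipK j).
Variable W : J -> set H.
Variable Lam : forall j, H -> K j.
Variable v : J -> R.
Variables A B : R.
Hypothesis hfr : gfusion_frame ipH ipK W Lam v A B.

Notation rip x y := (complex.Re (ipH x y)).
Notation n2 := (nrm2 ipH).

Lemma fA : 0 < A. Proof. by case: hfr. Qed.
Lemma fAB : A <= B. Proof. by case: hfr => _ []. Qed.
Lemma fB : 0 < B. Proof. exact: lt_le_trans fA fAB. Qed.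
Lemma fW j : closed_subspace ipH (W j). Proof. by case: hfr => _ [] _ [] h _. Qed.
Lemma fL j : bounded_op ipH (@ipK j) (Lam j). Proof. by case: hfr => _ [] _ [] _ [] _ [] h _. Qed.
Lemma fbnd f : ((A * n2 f)%:E <= gf_sum ipH ipK W Lam v f)%E /\
  (gf_sum ipH ipK W Lam v f <= (B * n2 f)%:E)%E.
Proof. by case: hfr => _ [] _ [] _ [] _ [] _ h. Qed.

Definition PW j := oproj ipH (W j).
Definition q j f := v j ^+ 2 * nrm2 (@ipK j) (Lam j (PW j f)).
Definition r j f g := v j ^+ 2 * complex.Re (@ipK j (Lam j (PW j f)) (Lam j (PW j g))).
Definition T j f := (v j ^+ 2)%:C *: PW j (adjoint ipH (@ipK j) (Lam j) (Lam j (PW j f))).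
Definition Q f := fine (gf_sum ipH ipK W Lam v f).

Lemma q_ge0 j f : 0 <= q j f.
Proof. by apply: mulr_ge0; [exact: sqr_ge0|exact: n2_ge0]. Qed.

Lemma gfE f : gf_sum ipH ipK W Lam v f = (Q f)%:E.
Proof.
rewrite /Q; have [h1 h2] := fbnd f.
by move: h1 h2; case: (gf_sum _ _ _ _ _ f).
Qed.

Lemma Q_bnd f : A * n2 f <= Q f /\ Q f <= B * n2 f.
Proof. by have [h1 h2] := fbnd f; move: h1 h2; rewrite gfE !lee_fin. Qed.

Lemma gfE2 f : gf_sum ipH ipK W Lam v f = (\esum_(j in [set: J]) (q j f)%:E)%E.
Proof. by []. Qed.

Lemma Q_ge_fsum f X : finite_set X -> \sum_(j \in X) q j f <= Q f.
Proof.
move=> fX; rewrite -lee_fin -gfE gfE2 -fsumEFin //.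
by apply: esum_ge; exists X => //; split.
Qed.

Lemma Q_adh f e : 0 < e -> exists X, finite_set X /\ Q f - e < \sum_(j \in X) q j f.
Proof.
move=> e0.
have hfin : (\esum_(j in [set: J]) (q j f)%:E)%E \is a fin_num by rewrite -gfE2 gfE.
have [x [X [fX _] <-] hx] := ub_ereal_sup_adherent e0 hfin.
exists X; split => //.
by move: hx; rewrite -/(esum _ _) -gfE2 gfE fsumEFin // -EFinB lte_fin.
Qed.

Lemma Q_net f : netlim (fun X => \sum_(j \in X) q j f) (Q f).
Proof.
move=> e e0; have [X0 [f0 h0]] := Q_adh f e0; exists X0; split => // X fX sX.
have h1 := Q_ge_fsum f fX.
have h2 : \sum_(j \in X0) q j f <= \sum_(j \in X) q j f.
  by apply: fsum_sub => // j; apply: q_ge0.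
rewrite ltr_norml; apply/andP; split; lra.
Qed.
End Frame.


Section Frame2.
Variable R : realType.
Variable J : countType.
Variable H : lmodType R[i].
Variable ipH : H -> H -> R[i].
Hypothesis hipH : is_inner_product ipH.
Hypothesis hcompH : complete_ip ipH.
Variable K : J -> lmodType R[i].
Variable ipK : forall j, K j -> K j -> R[i].
Hypothesis hipK : forall j, is_inner_product (@ipK j).
Variable W : J -> set H.
Variable Lam : forall j, H -> K j.
Variable v : J -> R.
Variables A B : R.
Hypothesis hfr : gfusion_frame ipH ipK W Lam v A B.

Notation rip x y := (complex.Re (ipH x y)).
Notation n2 := (nrm2 ipH).
Notation T := (T ipH ipK W Lam v).
Notation q := (q ipH ipK W Lam v).
Notation r := (r ipH ipK W Lam v).
Notation Q := (Q ipH ipK W Lam v).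
Notation S := (gf_op ipH ipK W Lam v).
Notation PW := (PW ipH W).

Lemma T_ip j f g : ipH (T j f) g = (v j ^+ 2)%:C * @ipK j (Lam j (PW j f)) (Lam j (PW j g)).
Proof.
rewrite /T (ipZl hipH) (ip_oproj hipH hcompH (fW hfr j)) (ipC hipH).
rewrite -(adj_spec hipH hcompH (hipK j) (fL hfr j)) -(ipC (hipK j)).
by [].
Qed.

Lemma T_rip j f g : rip (T j f) g = r j f g.
Proof. by rewrite T_ip kReMr. Qed.

Lemma r_sym j f g : r j f g = r j g f.
Proof. by rewrite /r (ripC (hipK j)). Qed.

Lemma r_diag j f : r j f f = q j f.
Proof. by []. Qed.

Lemma r_amgm j (t : R) f g : 2 * t * r j f g <= t ^+ 2 * q j f + q j g.
Proof.
rewrite /r /q; have h := rip_amgm (hipK j) t (Lam j (PW j f)) (Lam j (PW j g)).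
have v0 := sqr_ge0 (v j).
set a := complex.Re _ in h *; set b := nrm2 _ _ in h *; set c := nrm2 _ _ in h *.
nra.
Qed.

Lemma fsum_amgm (X : set J) (t : R) f g : finite_set X ->
  2 * t * \sum_(j \in X) r j f g <= t ^+ 2 * \sum_(j \in X) q j f + \sum_(j \in X) q j g.
Proof.
move=> fX; rewrite !mulr_fsumr -fsum_split //; apply: fsum_le => // j.
by move=> *; apply: r_amgm.
Qed.

Lemma tail_bound (Y : set J) f : finite_set Y ->
  n2 (\sum_(j \in Y) T j f) <= B * \sum_(j \in Y) q j f.
Proof.
move=> fY; set z := \sum_(j \in Y) T j f.
have e : n2 z = \sum_(j \in Y) r j f z.
  rewrite /nrm2 {1}/z fsum_rip //; apply: eq_fsbigr => j _; exact: T_rip.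
have h := fsum_amgm B f z fY.
have hq : \sum_(j \in Y) q j z <= B * n2 z.
  apply: le_trans (Q_ge_fsum hfr z fY) _; exact: (Q_bnd hfr z).2.
have B0 := fB hfr; have n0 := n2_ge0 hipH z.
rewrite -e in h.
have : B * n2 z <= B * (B * \sum_(j \in Y) q j f) by nra.
by rewrite ler_pM2l.
Qed.

Lemma S_ex f : exists s, hsum_to ipH (fun j => T j f) s.
Proof.
apply: (hsum_conv hipH hcompH) => e e0.
have B0 := fB hfr.
have eB : 0 < e / B by rewrite divr_gt0.
have [X [fX hX]] := Q_adh hfr f eB; exists X; split => // Y fY hXY.
apply: le_lt_trans (tail_bound f fY) _.
have fU : finite_set (X `|` Y) by rewrite finite_setU.
have hU := Q_ge_fsum hfr f fU.
rewrite fsumU // in hU.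
rewrite -ltr_pdivlMl // mulrC.
lra.
Qed.

Lemma S_spec f : hsum_to ipH (fun j => T j f) (S f).
Proof. exact: (xgetPex 0 (S_ex f)). Qed.

Lemma S_net f g : netlim (fun X => \sum_(j \in X) r j f g) (rip (S f) g).
Proof.
apply: netlim_ext (hsum_rip hipH g (S_spec f)) => X fX.
by apply: eq_fsbigr => j _; exact: T_rip.
Qed.

Lemma S_diag f : rip (S f) f = Q f.
Proof.
apply: netlim_unique (S_net f f) _.
by apply: (netlim_ext _ (Q_net hipK hfr f)) => X fX.
Qed.

Lemma S_sym f g : rip (S f) g = rip (S g) f.
Proof.
apply: netlim_unique (S_net f g) _.
apply: netlim_ext (S_net g f) => X fX; apply: eq_fsbigr => j _; exact: r_sym.
Qed.

Lemma S_amgm f g (t : R) : 0 < t -> 2 * t * rip (S f) g <= t ^+ 2 * Q f + Q g.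
Proof.
move=> t0; rewrite -ler_pdivlMl ?mulr_gt0 //.
apply: (netlim_le (S_net f g)) => X fX; rewrite ler_pdivlMl ?mulr_gt0 //.
apply: le_trans (fsum_amgm t f g fX) _.
have := Q_ge_fsum hfr f fX; have := Q_ge_fsum hfr g fX; have := sqr_ge0 t; nra.
Qed.

Lemma PWL j a f g : PW j (a *: f + g) = a *: PW j f + PW j g.
Proof. exact: (oprojL hipH hcompH (fW hfr j)). Qed.

Lemma T_lin j a f g : T j (a *: f + g) = a *: T j f + T j g.
Proof.
rewrite /T PWL (LamL (fL hfr j)) (adjL hipH hcompH (hipK j) (fL hfr j)) PWL.
by rewrite scalerDr !scalerA mulrC.
Qed.

Lemma S_lin a f g : S (a *: f + g) = a *: S f + S g.
Proof.
apply: (hsum_unique hipH (S_spec _)).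
have := hsum_lin hipH a (S_spec f) (S_spec g).
by congr hsum_to; apply: funext => j; rewrite T_lin.
Qed.
End Frame2.


Section Frame3.
Variable R : realType.
Variable J : countType.
Variable H : lmodType R[i].
Variable ipH : H -> H -> R[i].
Hypothesis hipH : is_inner_product ipH.
Hypothesis hcompH : complete_ip ipH.
Variable K : J -> lmodType R[i].
Variable ipK : forall j, K j -> K j -> R[i].
Hypothesis hipK : forall j, is_inner_product (@ipK j).
Variable W : J -> set H.
Variable Lam : forall j, H -> K j.
Variable v : J -> R.
Variables A B : R.
Hypothesis hfr : gfusion_frame ipH ipK W Lam v A B.

Notation rip x y := (complex.Re (ipH x y)).
Notation n2 := (nrm2 ipH).
Notation Q := (Q ipH ipK W Lam v).
Notation S := (gf_op ipH ipK W Lam v).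

Lemma S_lin' a f g : S (a *: f + g) = a *: S f + S g.
Proof. exact: (S_lin hipH hcompH hipK hfr). Qed.
Lemma S0 : S 0 = 0.
Proof.
have := S_lin' 1 0 0; rewrite scaler0 addr0 scale1r => /eqP.
by rewrite -subr_eq0 opprD addrA subrr sub0r oppr_eq0 => /eqP.
Qed.
Lemma SZ a x : S (a *: x) = a *: S x.
Proof. by rewrite -[a *: x]addr0 S_lin' S0 addr0. Qed.
Lemma SD x y : S (x + y) = S x + S y.
Proof. by rewrite -{1}[x]scale1r S_lin' scale1r. Qed.
Lemma SN x : S (- x) = - S x.
Proof. by rewrite -scaleN1r SZ scaleN1r. Qed.
Lemma SB x y : S (x - y) = S x - S y.
Proof. by rewrite SD SN. Qed.

Lemma S_diag' f : rip (S f) f = Q f.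
Proof. exact: (S_diag hipH hcompH hipK hfr). Qed.
Lemma S_sym' f g : rip (S f) g = rip (S g) f.
Proof. exact: (S_sym hipH hcompH hipK hfr). Qed.

Lemma S_bound f : n2 (S f) <= B ^+ 2 * n2 f.
Proof.
have B0 := fB hfr.
have h := S_amgm hipH hcompH hipK hfr f (S f) B0.
have [_ h1] := Q_bnd hfr f; have [_ h2] := Q_bnd hfr (S f).
rewrite -/(nrm2 ipH (S f)) in h.
have := n2_ge0 hipH f; have := n2_ge0 hipH (S f).
move=> a b.
have : B * n2 (S f) <= B * (B ^+ 2 * n2 f) by nra.
by rewrite ler_pM2l.
Qed.

Lemma S_lower f : A ^+ 2 * n2 f <= n2 (S f).
Proof.
have A0 := fA hfr.
have [h1 _] := Q_bnd hfr f; rewrite -S_diag' in h1.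
have hcs := CS hipH (S f) f.
have n0 := n2_ge0 hipH f; have n1 := n2_ge0 hipH (S f).
have [->|fn0] := eqVneq (n2 f) 0; first by rewrite mulr0.
have fp : 0 < n2 f by rewrite lt_def fn0.
have p1 : 0 <= A * n2 f by apply: mulr_ge0 => //; exact: ltW.
have p2 : 0 <= rip (S f) f := le_trans p1 h1.
have p3 : (A * n2 f) ^+ 2 <= rip (S f) f ^+ 2 by rewrite ler_pXn2r ?nnegrE.
have : (A * n2 f) ^+ 2 <= n2 (S f) * n2 f := le_trans p3 hcs.
rewrite exprMn => hh; nra.
Qed.

Lemma S_selfadj f g : ipH (S f) g = ipH f (S g).
Proof.
apply: kcomplex_eqRI.
  by rewrite S_sym' (ripC hipH).
rewrite !(Im_ip hipH) -SZ S_sym' SZ (ripC hipH) //.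
Qed.

Lemma S_cvg u l : cvg2 ipH u l -> cvg2 ipH (fun n => S (u n)) (S l).
Proof.
move=> h e e0.
have B0 := fB hfr.
have d0 : 0 < e / B ^+ 2 by rewrite divr_gt0 ?exprn_gt0.
have [N hN] := h _ d0; exists N => n /hN hn.
rewrite -SB; apply: le_lt_trans (S_bound _) _.
by rewrite mulrC -ltr_pdivlMr ?exprn_gt0.
Qed.

Definition Rg := [set y | exists x, y = S x].

Lemma Rg_closed : closed_subspace ipH Rg.
Proof.
split; first by exists 0; rewrite S0.
split; first by move=> a y1 y2 [x1 ->] [x2 ->]; exists (a *: x1 + x2); rewrite S_lin'.
move=> u l hu /cvg2P hl.
have [xs hxs] := choice hu.
have A0 := fA hfr.
have hc : forall m n, A ^+ 2 * n2 (xs m - xs n) <= n2 (u m - u n).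
  by move=> m n; rewrite !hxs -SB; apply: S_lower.
have [x hx] : exists x, cvg2 ipH xs x.
  apply: (complete2 hcompH) => e e0.
  have d0 : 0 < A ^+ 2 * e / 4 by rewrite !mulr_gt0 ?exprn_gt0.
  have [N hN] := hl _ d0; exists N => m n hm hn.
  have h1 := hN _ hm; have h2 := hN _ hn.
  have := n2_le2B hipH (u m) l (u n); rewrite (n2_sym hipH l).
  have := hc m n; have := n2_ge0 hipH (xs m - xs n).
  have A2 : 0 < A ^+ 2 by rewrite exprn_gt0.
  move=> p q r.
  have : A ^+ 2 * n2 (xs m - xs n) < A ^+ 2 * e by lra.
  by rewrite ltr_pM2l.
exists x; apply: (cvg2_unique hipH hl).
move=> e e0; have [N hN] := S_cvg hx e0; exists N => n /hN.
by rewrite -hxs.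
Qed.

Lemma S_surj y : exists x, S x = y.
Proof.
have [hp ho] := oproj_spec hipH hcompH Rg_closed y.
set z := y - oproj ipH Rg y in ho.
have hz : ipH z (S z) = 0 by apply: ho; exists z.
have : Q z <= 0.
  rewrite -S_diag' (ripC hipH); move: hz => ->; by [].
have [h1 _] := Q_bnd hfr z; have A0 := fA hfr; have := n2_ge0 hipH z => n0 hq.
have : n2 z = 0.
  apply/eqP; rewrite eq_le n0 andbT.
  have : A * n2 z <= 0 by apply: le_trans h1 hq.
  by rewrite pmulr_rle0.
move=> /(n2_eq0 hipH) z0.
case: hp => x hx; exists x; rewrite -hx.
by apply/eqP; rewrite -subr_eq0 -oppr_eq0 opprB -/z z0.
Qed.

Lemma S_inj x y : S x = S y -> x = y.
Proof.
move=> e; apply/eqP; rewrite -subr_eq0; apply/eqP; apply: (n2_eq0 hipH).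
have := S_lower (x - y); rewrite SB e subrr n2_0 // => h.
have A0 := fA hfr; have := n2_ge0 hipH (x - y); have A2 : 0 < A ^+ 2 by rewrite exprn_gt0.
nra.
Qed.

Notation Ti := (Defs.finv S).

Lemma STi (y : H) : S (Ti y) = y.
Proof. exact: (xgetPex 0 (S_surj y)). Qed.

Lemma TiS (x : H) : Ti (S x) = x.
Proof. by apply: S_inj; rewrite STi. Qed.

Lemma Ti_lin a (x y : H) : Ti (a *: x + y) = a *: Ti x + Ti y.
Proof. by apply: S_inj; rewrite STi S_lin' !STi. Qed.

Lemma Ti_selfadj (x y : H) : ipH (Ti x) y = ipH x (Ti y).
Proof. by rewrite -{1}(STi y) -S_selfadj STi. Qed.

Lemma Ti_bound (f : H) : A ^+ 2 * n2 (Ti f) <= n2 f.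
Proof. by rewrite -{2}(STi f); apply: S_lower. Qed.

Lemma Q_Ti (f : H) : Q (Ti f) = rip f (Ti f).
Proof. by rewrite -S_diag' STi. Qed.
End Frame3.


Section Frame4.
Variable R : realType.
Variable J : countType.
Variable H : lmodType R[i].
Variable ipH : H -> H -> R[i].
Hypothesis hipH : is_inner_product ipH.
Hypothesis hcompH : complete_ip ipH.
Variable K : J -> lmodType R[i].
Variable ipK : forall j, K j -> K j -> R[i].
Hypothesis hipK : forall j, is_inner_product (@ipK j).
Variable W : J -> set H.
Variable Lam : forall j, H -> K j.
Variable v : J -> R.
Variables A B : R.
Hypothesis hfr : gfusion_frame ipH ipK W Lam v A B.

Notation rip x y := (complex.Re (ipH x y)).
Notation n2 := (nrm2 ipH).
Notation Q := (Q ipH ipK W Lam v).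
Notation S := (gf_op ipH ipK W Lam v).
Notation Ti := (Defs.finv S).
Notation U := (dual_space ipH ipK W Lam v).

Lemma Ti0 : Ti 0 = 0.
Proof. by rewrite -{1}(S0 hipH hcompH hipK hfr) (TiS hipH hcompH hipK hfr). Qed.

Lemma TiB (x y : H) : Ti (x - y) = Ti x - Ti y.
Proof.
apply: (S_inj hipH hcompH hipK hfr).
by rewrite (STi hipH hcompH hipK hfr) (SB hipH hcompH hipK hfr) !(STi hipH hcompH hipK hfr).
Qed.

Lemma U_closed j : closed_subspace ipH (U j).
Proof.
have hW := fW hfr j.
split; first by exists 0; [exact: (W0 hW)|exact: Ti0].
split.
  move=> a x y [w1 hw1 <-] [w2 hw2 <-]; exists (a *: w1 + w2).
    exact: (WL hW).
  exact: (Ti_lin hipH hcompH hipK hfr).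
move=> u l hu /cvg2P hl.
have hex : forall n, exists w, W j w /\ Ti w = u n.
  by move=> n; case: (hu n) => w hw e; exists w.
have [ws hws] := choice hex.
have hS : forall n, S (u n) = ws n.
  by move=> n; rewrite -(hws n).2 (STi hipH hcompH hipK hfr).
have hc : cvg2 ipH ws (S l).
  move=> e e0; have [N hN] := S_cvg hipH hcompH hipK hfr hl e0.
  by exists N => n /hN; rewrite hS.
exists (S l); first exact: (Wlim hW (fun n => (hws n).1) hc).
exact: (TiS hipH hcompH hipK hfr).
Qed.

Lemma dual_proj j f : PW ipH W j (Ti (oproj ipH (U j) f)) = PW ipH W j (Ti f).
Proof.
have hW := fW hfr j.
have [hp ho] := oproj_spec hipH hcompH (U_closed j) f.
set g := oproj ipH (U j) f in hp ho *.
have [hp2 ho2] := oproj_spec hipH hcompH hW (Ti g).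
rewrite /PW; symmetry; apply: (oproj_unique hipH hcompH hW) => // w hw.
have -> : Ti f - oproj ipH (W j) (Ti g) = Ti (f - g) + (Ti g - oproj ipH (W j) (Ti g)).
  by rewrite TiB addrA subrK.
rewrite (ipDl hipH) ho2 // addr0 (Ti_selfadj hipH hcompH hipK hfr).
by apply: ho; exists w.
Qed.

Lemma dual_gf f : gf_sum ipH ipK U (dual_op ipH ipK W Lam v) v f =
  gf_sum ipH ipK W Lam v (Ti f).
Proof.
rewrite /gf_sum; congr esum; apply: funext => j.
by rewrite /dual_op -/(PW ipH W j _) dual_proj.
Qed.

Lemma polar u w : Q (u + w) - Q (u - w) = 4 * rip (S u) w.
Proof.
rewrite -!(S_diag' hipH hcompH hipK hfr) (SD hipH hcompH hipK hfr) (SB hipH hcompH hipK hfr).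
rewrite !(ripDl hipH) !(ripDr hipH) !(ripNl hipH) !(ripNr hipH).
have -> : rip (S w) u = rip (S u) w by rewrite (S_sym' hipH hcompH hipK hfr).
lra.
Qed.

Lemma ripS_scale (a b : R) u w : rip (S (a%:C *: u)) (b%:C *: w) = a * b * rip (S u) w.
Proof.
by rewrite (SZ hipH hcompH hipK hfr) (ripZl hipH) (ripZr hipH) mulrA.
Qed.

End Frame4.


Theorem theorem4p2 (R : realType) (J : countType)
  (H : lmodType R[i]) (ipH : H -> H -> R[i])
  (K : J -> lmodType R[i]) (ipK : forall j, K j -> K j -> R[i])
  (W V : J -> set H) (Lam Gam : forall j, H -> K j) (v : J -> R)
  (A1 B1 A2 B2 D : R) :
  is_hilbert ipH -> separable ipH ->
  (forall j, is_hilbert (ipK j)) ->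
  gfusion_frame ipH ipK W Lam v A1 B1 ->
  gfusion_frame ipH ipK V Gam v A2 B2 ->
  0 < D ->
  (forall f : H,
     (`| gf_sum ipH ipK W Lam v f - gf_sum ipH ipK V Gam v f |
        <= (D * nrm2 ipH f)%:E)%E) ->
  forall f : H,
    (`| gf_sum ipH ipK (dual_space ipH ipK W Lam v) (dual_op ipH ipK W Lam v) v f
        - gf_sum ipH ipK (dual_space ipH ipK V Gam v) (dual_op ipH ipK V Gam v) v f |
       <= ((D / (A1 * A2)) * nrm2 ipH f)%:E)%E.
Proof.
move=> [hipH hcompH] _ hK fL fG D0 hD f.
have hipK : forall j, is_inner_product (@ipK j) by move=> j; case: (hK j).
have hD' : forall g, `|Q ipH ipK W Lam v g - Q ipH ipK V Gam v g| <= D * nrm2 ipH g.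
  by move=> g; have := hD g; rewrite (gfE fL) (gfE fG) -EFinB abse_EFin lee_fin.
rewrite (dual_gf hipH hcompH hipK fL) (dual_gf hipH hcompH hipK fG).
rewrite (gfE fL) (gfE fG) -EFinB abse_EFin lee_fin.
rewrite (Q_Ti hipH hcompH hipK fL) (Q_Ti hipH hcompH hipK fG).
set SL := gf_op ipH ipK W Lam v; set SG := gf_op ipH ipK V Gam v.
set x := Defs.finv SL f; set y := Defs.finv SG f.
have fx : SL x = f by apply: (STi hipH hcompH hipK fL).
have fy : SG y = f by apply: (STi hipH hcompH hipK fG).
set al := complex.Re (ipH (SL y) x); set be := complex.Re (ipH (SG y) x).
have e1 : complex.Re (ipH f x) = be by rewrite -fy.
have e2 : complex.Re (ipH f y) = al.
  by rewrite -fx (S_sym' hipH hcompH hipK fL).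
rewrite e1 e2.
have A10 := fA fL; have A20 := fA fG.
set u := A2%:C *: y; set w := A1%:C *: x.
have h1 := hD' (u + w); have h2 := hD' (u - w).
have p1 := polar hipH hcompH hipK fL u w.
have p2 := polar hipH hcompH hipK fG u w.
rewrite /u /w (ripS_scale hipH hcompH hipK fL) -/al in p1.
rewrite /u /w (ripS_scale hipH hcompH hipK fG) -/be in p2.
have par := n2_par hipH u w.
have bu : nrm2 ipH u <= nrm2 ipH f.
  by rewrite /u (n2Z hipH); apply: (Ti_bound hipH hcompH hipK fG).
have bw : nrm2 ipH w <= nrm2 ipH f.
  by rewrite /w (n2Z hipH); apply: (Ti_bound hipH hcompH hipK fL).
have P0 : 0 < A1 * A2 by rewrite mulr_gt0.
rewrite mulrAC ler_pdivlMr //.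
have -> : `|be - al| * (A1 * A2) = `|A2 * A1 * be - A2 * A1 * al|.
  by rewrite -mulrBr normrM (gtr0_norm (mulr_gt0 A20 A10)) mulrC [A2 * A1]mulrC.
have bu' : D * nrm2 ipH u <= D * nrm2 ipH f by rewrite ler_pM2l.
have bw' : D * nrm2 ipH w <= D * nrm2 ipH f by rewrite ler_pM2l.
have par' : D * nrm2 ipH (u + w) + D * nrm2 ipH (u - w) =
    2 * (D * nrm2 ipH u) + 2 * (D * nrm2 ipH w).
  by rewrite -mulrDr par; ring.
move: h1 h2; rewrite !ler_norml => /andP [h1a h1b] /andP [h2a h2b].
move: p1 p2 par' bu' bw' h1a h1b h2a h2b.
move: (A2 * A1 * al) (A2 * A1 * be) => a' b'.
rewrite -/u -/w.
move=> *; apply/andP; split; lra.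
Qed.
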